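(* Let $(G,u,v,\alpha,\beta)$ be a Guvab with $\beta=1$. If there exists $N\ge0$ such that $\{W_n\}_{n\ge N}$ is a constant sequence, then $\{W_n\}_{n\ge1}$ is a constant sequence.
   Context: A Guvab is a tuple $(G,u,v,\alpha,\beta)$ where $G$ is a finite, connected, simple graph, $u,v\in V(G)$, and $\alpha,\beta\in[0,1]$ with $\alpha\le\beta$. A random walk on $G$ with starting vertex $w$ and laziness $\gamma$ is the Markov chain $R_0=w$ and, for $i\ge1$, $R_i=R_{i-1}$ with probability $\gamma$ and $R_i=t$ with probability $\frac{1-\gamma}{\deg(R_{i-1})}$ for each neighbor $t$ of $R_{i-1}$. $\mu_n$ is the distribution after $n$ steps of the walk from $u$ with laziness $\alpha$, $\nu_n$ that of the walk from $v$ with laziness $\beta$, and $W_n=W(\mu_n,\nu_n)$ is the Wasserstein ($L^1$ optimal transport) distance with respect to the graph distance. *)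

(* Defs.v *)
From HB Require Import structures.
From mathcomp Require Import all_boot all_order all_algebra.
From mathcomp Require Import boolp classical_sets reals.
Set Implicit Arguments. Unset Strict Implicit. Unset Printing Implicit Defensive.
Import Order.TTheory GRing.Theory Num.Theory.
Local Open Scope ring_scope.
Local Open Scope classical_set_scope.

Definition simple_graph (T : finType) (e : rel T) : Prop :=
  symmetric e /\ irreflexive e.
Definition connected_graph (T : finType) (e : rel T) : Prop :=
  forall x y : T, connect e x y.

Fixpoint gball (T : finType) (e : rel T) (n : nat) (x : T) : {set T} :=
  match n with
  | 0 => [set x]
  | n'.+1 => gball e n' x :|: [set y | [exists z in gball e n' x, e z y]]
  end.

(* graph distance: least n with y in the n-ball of x (searched among
   0 .. #|T|-1, which suffices in a connected graph) *)
Definition gdist (T : finType) (e : rel T) (x y : T) : nat :=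
  find (fun n => y \in gball e n x) (iota 0 #|T|).

Definition deg (T : finType) (e : rel T) (x : T) : nat := #|[set z | e x z]|.

Definition dirac (R : realType) (T : finType) (w : T) : {ffun T -> R} :=
  [ffun x => if x == w then 1 else 0].

Definition walk_step (R : realType) (T : finType) (e : rel T) (g : R)
  (p : {ffun T -> R}) : {ffun T -> R} :=
  [ffun y => g * p y + \sum_(x | e x y) p x * ((1 - g) / (deg e x)%:R)].

Definition walk_dist (R : realType) (T : finType) (e : rel T) (w : T) (g : R)
  (n : nat) : {ffun T -> R} := iter n (walk_step e g) (dirac R w).

Definition coupling (R : realType) (T : finType) (mu nu : {ffun T -> R})
  (pi : {ffun T * T -> R}) : Prop :=
  (forall xy, 0 <= pi xy) /\
  (forall x, \sum_(y : T) pi (x, y) = mu x) /\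
  (forall y, \sum_(x : T) pi (x, y) = nu y).

Definition transport_cost (R : realType) (T : finType) (e : rel T)
  (pi : {ffun T * T -> R}) : R :=
  \sum_(xy : T * T) pi xy * (gdist e xy.1 xy.2)%:R.

Definition wasserstein (R : realType) (T : finType) (e : rel T)
  (mu nu : {ffun T -> R}) : R :=
  inf [set c : R | exists pi, coupling mu nu pi /\ c = transport_cost e pi].

Definition Wn (R : realType) (T : finType) (e : rel T) (u v : T) (alpha beta : R)
  (n : nat) : R :=
  wasserstein e (walk_dist e u alpha n) (walk_dist e v beta n).

(* Main.v *)
Require Import Defs.
From HB Require Import structures.
From mathcomp Require Import all_boot all_order all_algebra.
From mathcomp Require Import boolp classical_sets reals.
From mathcomp Require Import ring lra zify.
Import Order.TTheory GRing.Theory Num.Theory.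
Local Open Scope ring_scope.

Section LA.
Variable R : realType.
Variable m : nat.
Variable A : 'M[R]_m.+1.
Variable w : 'I_m.+1 -> R.
Hypothesis wpos : forall i, 0 < w i.
Hypothesis wsym : forall i j, w i * A i j = w j * A j i.

Lemma sa_col (y : 'cV[R]_m.+1) : A *m (A *m y) = 0 -> A *m y = 0.
Proof.
move=> H; set z := A *m y.
have E : \sum_i w i * (z i 0 ^+ 2) = 0.
  have -> : \sum_i w i * (z i 0 ^+ 2)
      = \sum_i \sum_j (w i * A i j) * z i 0 * y j 0.
    apply: eq_bigr => i _; rewrite expr2 {3}/z mxE mulr_sumr mulr_sumr.
    by apply: eq_bigr => j _; ring.
  rewrite exchange_big /=.
  have -> : \sum_j \sum_i (w i * A i j) * z i 0 * y j 0
     = \sum_j (y j 0 * w j) * (A *m z) j 0.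
    apply: eq_bigr => j _; rewrite mxE mulr_sumr.
    by apply: eq_bigr => i _; rewrite wsym; ring.
  by rewrite /z H; apply: big1 => j _; rewrite mxE mulr0.
apply/matrixP => i j; rewrite (ord1 j) [RHS]mxE.
have := psumr_eq0P (fun k _ => mulr_ge0 (ltW (wpos k)) (sqr_ge0 (z k 0))) E (erefl true : true) ; move=> /(_ i) H0.
move: H0 => /eqP; rewrite mulf_eq0 (gt_eqF (wpos i)) /= expf_eq0 /= => /eqP.
by [].

Qed.

Lemma sa_mx (Y : 'M[R]_m.+1) : A *m (A *m Y) = 0 -> A *m Y = 0.
Proof.
move=> H; apply/matrixP => i j.
have hc : forall M : 'M[R]_m.+1, col j (A *m M) = A *m col j M.
  by move=> M; rewrite !colE mulmxA.
have := @sa_col (col j Y).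
rewrite -!hc H.
have -> : col j (0 : 'M[R]_m.+1) = 0 by apply/matrixP => a b; rewrite !mxE.
move=> /(_ erefl) /matrixP /(_ i 0).
by rewrite !mxE.
Qed.

Lemma key_ind d : forall c : nat -> R,
  A * (\sum_(i < d) c i *: A ^+ i) = 0 -> (exists i, (i < d)%N /\ c i != 0) ->
  exists d' (c' : nat -> R), A = \sum_(j < d') c' j *: A ^+ j.+2.
Proof.
elim: d => [|d IH] c H [i [Hi Hc]]; first by [].
move: H; rewrite big_ord_recl /= expr0.
have Es : \sum_(i < d) c (lift ord0 i) *: A ^+ lift ord0 i
          = A * \sum_(i < d) c i.+1 *: A ^+ i.
  rewrite mulr_sumr; apply: eq_bigr => k _.
  by rewrite /= -scalerAr exprS.
rewrite Es.
have [c0|c0] := eqVneq (c 0%N) 0.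
  rewrite c0 scale0r add0r => H.
  have H2 := @sa_mx (\sum_(i < d) c i.+1 *: A ^+ i).
  rewrite !mulmxE in H2; have H3 := H2 H.
  apply: (IH (fun k => c k.+1) H3).
  case: i Hi Hc => [|i'] Hi Hc; first by rewrite c0 eqxx in Hc.
  by exists i'.
move=> H; exists d, (fun k => - c k.+1 / c 0%N).
rewrite mulrDr mulrA mulr_sumr -scalerAr mulr1 in H.
have : c 0%N *: A = - \sum_(i < d) c i.+1 *: A ^+ i.+2.
  apply/eqP; rewrite -addr_eq0; apply/eqP; rewrite -[RHS]H; congr (_ + _).
  by apply: eq_bigr => k _; rewrite -scalerAr -mulrA -!exprS.
move=> /(congr1 (fun M => (c 0%N)^-1 *: M)).
rewrite scalerA mulVf // scale1r => E; rewrite {1}E.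
rewrite scalerN scaler_sumr -sumrN; apply: eq_bigr => k _.
by rewrite scalerA -scaleNr mulrC mulNr.
Qed.

Lemma key : exists d (c : nat -> R), A = \sum_(j < d) c j *: A ^+ j.+2.
Proof.
set p := char_poly A.
have CH : \sum_(i < size p) p`_i *: A ^+ i = 0.
  transitivity (horner_mx A (\sum_(i < size p) p`_i *: 'X^i)).
    rewrite linear_sum; apply: eq_bigr => i _.
    by rewrite linearZ /= rmorphXn /= horner_mx_X.
  by rewrite -poly_def coefK Cayley_Hamilton.
apply: (@key_ind (size p) (fun i => p`_i)); first by rewrite CH mulr0.
exists m.+1; split; first by rewrite size_char_poly.
have := char_poly_monic A; rewrite -/p => /monicP.
by rewrite lead_coefE size_char_poly /= => ->; apply: oner_neq0.
Qed.

Lemma seq_zero (r : 'rV[R]_m.+1) (q : 'cV[R]_m.+1) N :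
  (forall k, (N <= k)%N -> (r *m A ^+ k *m q) 0 0 = 0) ->
  forall k, (1 <= k)%N -> (r *m A ^+ k *m q) 0 0 = 0.
Proof.
move=> HN.
have [d [c E]] := key.
have rec : forall k, (r *m A ^+ k.+1 *m q) 0 0
    = \sum_(j < d) c j * (r *m A ^+ (k + j.+2) *m q) 0 0.
  move=> k.
  have -> : A ^+ k.+1 = \sum_(j < d) c j *: A ^+ (k + j.+2).
    rewrite exprSr {2}E mulr_sumr; apply: eq_bigr => j _.
    by rewrite -scalerAr exprD.
  rewrite mulmx_sumr mulmx_suml summxE; apply: eq_bigr => j _.
  by rewrite -scalemxAr -scalemxAl mxE.
have main : forall t k, (N <= k.+1 + t)%N -> (r *m A ^+ k.+1 *m q) 0 0 = 0.
  elim=> [|t IH] k Hk; first by apply: HN; rewrite addn0 in Hk.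
  rewrite rec big1 // => j _.
  have -> : (k + j.+2 = (k + j.+1).+1)%N by rewrite addnS.
  rewrite IH ?mulr0 //.
  by move: Hk; clear; lia.
by case=> [|k] // _; apply: (main N k); exact: leq_addl.
Qed.
End LA.

Section G.
Variable R : realType.
Variable T : finType.
Variable e : rel T.

Definition Pf (g : R) (x y : T) : R :=
  (if x == y then g else 0) + (if e x y then (1 - g) / (deg e x)%:R else 0).

Lemma walk_stepE (g : R) (p : {ffun T -> R}) y : walk_step e g p y = \sum_x p x * Pf g x y.
Proof.
rewrite ffunE /Pf.
under [RHS]eq_bigr do rewrite mulrDr.
rewrite big_split /=.
have -> : \sum_i p i * (if i == y then g else 0) = p y * g.
  by rewrite (bigD1 y) //= eqxx big1 ?addr0 // => x /negbTE ->; rewrite mulr0.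
rewrite mulrC; congr (_ + _).
rewrite big_mkcond /=; apply: eq_bigr => x _.
by case: (e x y); rewrite ?mulr0.
Qed.

Lemma Pf_ge0 (g : R) x y : 0 <= g -> g <= 1 -> 0 <= Pf g x y.
Proof.
move=> h0 h1; rewrite /Pf; apply: addr_ge0; case: ifP => // _.
by apply: divr_ge0; [rewrite subr_ge0 | apply: ler0n].
Qed.

Lemma walk_step_ge0 (g : R) (p : {ffun T -> R}) y : 0 <= g -> g <= 1 -> (forall x, 0 <= p x) ->
  0 <= walk_step e g p y.
Proof.
move=> h0 h1 hp; rewrite walk_stepE; apply: sumr_ge0 => x _.
by apply: mulr_ge0; [apply: hp | apply: Pf_ge0].
Qed.

Lemma degE x : deg e x = #|[set z | e x z]|.
Proof. by apply: eq_card => z; rewrite inE; apply/idP/idP; rewrite in_setE. Qed.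

Lemma deg_gt0 x z : e x z -> (0 < deg e x)%N.
Proof. by move=> hz; rewrite degE; apply/card_gt0P; exists z; rewrite inE. Qed.

Lemma sum_Pf (g : R) x : (exists z, e x z) -> \sum_y Pf g x y = 1.
Proof.
move=> [z hz]; rewrite /Pf big_split /= (bigD1 x) //= eqxx big1 ?addr0; last first.
  by move=> y; rewrite eq_sym => /negbTE ->.
rewrite -big_mkcond /=.
rewrite (eq_bigl (fun y => y \in [set z | e x z])); last by move=> y; rewrite inE.
have Hs : \sum_(y in [set z | e x z]) ((1 - g) / (deg e x)%:R)
   = (1 - g) / (deg e x)%:R *+ deg e x by rewrite sumr_const degE.
rewrite Hs -mulr_natr.
have hd : (deg e x)%:R != 0 :> R.
  by rewrite pnatr_eq0 -lt0n; apply: (@deg_gt0 x z hz).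
field; exact: hd.
Qed.

Lemma sum_walk_step (g : R) (p : {ffun T -> R}) : (forall x, exists z, e x z) ->
  \sum_y walk_step e g p y = \sum_x p x.
Proof.
move=> hn; under eq_bigr do rewrite walk_stepE.
rewrite exchange_big /=; apply: eq_bigr => x _.
by rewrite -mulr_sumr sum_Pf ?mulr1.
Qed.

Lemma walk_dist_ge0 w (g : R) n x : 0 <= g -> g <= 1 -> 0 <= walk_dist e w g n x.
Proof.
move=> h0 h1; elim: n x => [|n IH] x.
  by rewrite /walk_dist /= /dirac ffunE; case: ifP.
by rewrite /walk_dist iterS; apply: walk_step_ge0.
Qed.

Lemma walk_dist_sum w (g : R) n : (forall x, exists z, e x z) ->
  \sum_x walk_dist e w g n x = 1.
Proof.
move=> hn; elim: n => [|n IH].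
  rewrite /walk_dist /= /dirac.
  under eq_bigr do rewrite ffunE.
  by rewrite -big_mkcond /= big_pred1_eq.
by rewrite /walk_dist iterS sum_walk_step.
Qed.

Lemma walk_dist1 w n : walk_dist e w 1 n = dirac R w.
Proof.
elim: n => [|n IH] //; rewrite /walk_dist iterS -/(walk_dist e w 1 n) IH.
apply/ffunP => y; rewrite ffunE mul1r subrr big1 ?addr0 // => x _.
by rewrite mul0r mulr0.
Qed.

Lemma cost_eq (v : T) (pi : {ffun T * T -> R}) :
  (forall x y, y != v -> pi (x, y) = 0) ->
  transport_cost e pi = \sum_x (\sum_y pi (x, y)) * (gdist e x v)%:R.
Proof.
move=> hz.
transitivity (\sum_x \sum_y pi (x, y) * (gdist e x y)%:R).
  by rewrite /transport_cost pair_bigA; apply: eq_bigr => [[x y]] _.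
apply: eq_bigr => x _.
rewrite (bigD1 v) //= big1 ?addr0; last by move=> y hy; rewrite hz ?mul0r.
rewrite (bigD1 v) //= big1 ?addr0 //; by move=> y hy; rewrite hz.
Qed.


Lemma gdist_single x0 : (forall y : T, y = x0) -> forall x y, gdist e x y = 0%N.
Proof.
move=> hall x y; rewrite (hall x) (hall y) /gdist.
have : (0 < #|T|)%N by apply/card_gt0P; exists x0.
case: #|T| => [|n] //= _.
by rewrite inE eqxx.
Qed.

Lemma Wn_formula (u v : T) (alpha : R) n :
  connected_graph e -> 0 <= alpha -> alpha <= 1 ->
  Wn e u v alpha 1 n = \sum_x walk_dist e u alpha n x * (gdist e x v)%:R.
Proof.
move=> hc h0 h1.
rewrite /Wn walk_dist1 /wasserstein.
set mu := walk_dist e u alpha n.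
have [hn|hn] := pselect (forall x, exists z, e x z).
  transitivity (inf [set \sum_x mu x * (gdist e x v)%:R]%classic); last exact: inf1.
  congr inf; apply/seteqP; split => c /=.
    move=> [pi [[hpos [hrow hcol]] ->]].
    have hz : forall x y, y != v -> pi (x, y) = 0.
      move=> x y hy.
      have := hcol y; rewrite /dirac ffunE (negbTE hy) => H.
      by have := psumr_eq0P (fun x _ => hpos (x, y)) H => /(_ x); apply.
    rewrite (@cost_eq v _ hz); apply: eq_bigr => x _; congr (_ * _).
    by rewrite hrow.
  move=> ->.
  exists [ffun xy : T * T => if xy.2 == v then mu xy.1 else 0].
  have hz : forall x y, y != v ->
      [ffun xy : T * T => if xy.2 == v then mu xy.1 else 0] (x, y) = 0.
    by move=> x y hy; rewrite ffunE /= (negbTE hy).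
  split; last first.
    rewrite (@cost_eq v _ hz); apply: eq_bigr => x _; congr (_ * _).
    by rewrite (bigD1 v) //= big1 ?addr0 ?ffunE /= ?eqxx // => y hy; rewrite hz.
  split; first by move=> [x y]; rewrite ffunE; case: ifP => _ //; apply: walk_dist_ge0.
  split.
    by move=> x; rewrite (bigD1 v) //= big1 ?addr0 ?ffunE /= ?eqxx // => y hy; rewrite hz.
  move=> y; rewrite /dirac ffunE.
  under eq_bigr do rewrite ffunE /=.
  case: (y == v); last by rewrite big1.
  exact: walk_dist_sum.
move/existsNP: hn => [x0 hx0].
have hall : forall y, y = x0.
  move=> y; move/connectP: (hc x0 y) => [p hp ->].
  case: p hp => [|z p] //= /andP [hz _].
  by exfalso; apply: hx0; exists z.
have hd := @gdist_single x0 hall.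
rewrite big1; last by move=> x _; rewrite hd mulr0.
have hS : forall c, (exists pi, coupling mu (dirac R v) pi /\ c = transport_cost e pi) -> c = 0.
  move=> c [pi [_ ->]]; rewrite /transport_cost big1 // => xy _.
  by rewrite hd mulr0.
have [[c0 hc0]|hne] := pselect (exists c, exists pi, coupling mu (dirac R v) pi /\ c = transport_cost e pi).
  rewrite (_ : [set c | _]%classic = [set 0]%classic) ?inf1 //.
  apply/seteqP; split => c /=; first exact: hS.
  by move=> ->; rewrite -(hS c0 hc0).
rewrite (_ : [set c | _]%classic = set0) ?inf0 //.
apply/seteqP; split => c //= hc'.
by apply: hne; exists c.
Qed.


Lemma Pf_sym (g : R) x y : symmetric e ->
  (maxn (deg e x) 1)%:R * Pf g x y = (maxn (deg e y) 1)%:R * Pf g y x.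
Proof.
move=> hs; rewrite /Pf.
have [->//|hxy] := eqVneq x y.
rewrite [e y x]hs !add0r.
case hxy': (e x y); last by rewrite !mulr0.
have dx := @deg_gt0 x y hxy'.
have hyx : e y x by rewrite hs.
have dy := @deg_gt0 y x hyx.
rewrite (maxn_idPl dx) (maxn_idPl dy).
have nx : (deg e x)%:R != 0 :> R by rewrite pnatr_eq0 -lt0n.
have ny : (deg e y)%:R != 0 :> R by rewrite pnatr_eq0 -lt0n.
by rewrite !mulrA !(mulrC _ (1 - g)) -!mulrA !divff.
Qed.

End G.

Theorem lemma7p2 (R : realType) (T : finType) (e : rel T) (u v : T) (alpha beta : R) :
  simple_graph e -> connected_graph e ->
  0 <= alpha -> alpha <= beta -> beta <= 1 ->
  beta = 1 ->
  (exists N : nat, forall n : nat, (N <= n)%N -> Wn e u v alpha beta n = Wn e u v alpha beta N) ->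
  forall n : nat, (1 <= n)%N -> Wn e u v alpha beta n = Wn e u v alpha beta 1.
Proof.
move=> [hsym _] hc h0 hab hb1 hb [N HN]; subst beta.
have hW := fun k => @Wn_formula R T e u v alpha k hc h0 hab.
have hT : (0 < #|T|)%N by apply/card_gt0P; exists u.
set m := #|T|.-1.
have hm : #|T| = m.+1 by rewrite prednK.
pose ev (i : 'I_m.+1) : T := enum_val (cast_ord (esym hm) i).
pose rk (x : T) : 'I_m.+1 := cast_ord hm (enum_rank x).
have evK : cancel ev rk by move=> i; rewrite /rk /ev enum_valK cast_ordKV.
have rkK : cancel rk ev by move=> x; rewrite /ev /rk cast_ordK enum_rankK.
have sumE : forall F : T -> R, \sum_x F x = \sum_i F (ev i).
  by move=> F; apply: (reindex ev (onW_bij _ (Bijective evK rkK))).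
pose A : 'M[R]_m.+1 := \matrix_(i, j) @Pf R T e alpha (ev i) (ev j).
pose w (i : 'I_m.+1) : R := (maxn (deg e (ev i)) 1)%:R.
have wpos : forall i, 0 < w i by move=> i; rewrite ltr0n leq_maxr.
have wsym : forall i j, w i * A i j = w j * A j i.
  by move=> i j; rewrite !mxE; apply: Pf_sym.
pose r : 'rV[R]_m.+1 := \row_i walk_dist e u alpha 0 (ev i).
have hr : forall k i, (r *m A ^+ k) 0 i = walk_dist e u alpha k (ev i).
  elim=> [|k IH] i; first by rewrite expr0 mulmx1 mxE.
  have -> : A ^+ k.+1 = A ^+ k *m A by rewrite exprSr.
  rewrite mulmxA mxE.
  rewrite /walk_dist iterS -/(walk_dist e u alpha k) walk_stepE sumE.
  by apply: eq_bigr => j _; rewrite IH mxE.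
pose q0 : 'cV[R]_m.+1 := \col_i (gdist e (ev i) v)%:R.
have hW' : forall k, Wn e u v alpha 1 k = (r *m A ^+ k *m q0) 0 0.
  by move=> k; rewrite hW mxE sumE; apply: eq_bigr => i _; rewrite hr mxE.
have hdiff : forall k, (r *m A ^+ k *m (A *m q0 - q0)) 0 0
    = Wn e u v alpha 1 k.+1 - Wn e u v alpha 1 k.
  move=> k; rewrite !hW' mulmxBr mxE.
  have -> : A ^+ k.+1 = A ^+ k *m A by rewrite exprSr.
  by rewrite !mulmxA [X in _ + X = _]mxE.
have hz := @seq_zero R m A w wpos wsym r (A *m q0 - q0) N.
have hz' : forall k, (1 <= k)%N -> Wn e u v alpha 1 k.+1 = Wn e u v alpha 1 k.
  move=> k hk; apply/eqP; rewrite -subr_eq0 -hdiff; apply/eqP; apply: hz => //.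
  by move=> j hj; rewrite hdiff HN ?HN ?subrr // leqW.
elim=> [//|n IH] _.
case: n IH => [//|n] IH.
by rewrite hz' // IH.
Qed.
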